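(* Let $C,D$ be d-cones with a bilinear map $\langle\cdot,\cdot\rangle\colon C\times D\to\overline{\mathbb{R}}_+$ which is non-singular and Scott-continuous in each argument separately. Let $C_0\subseteq C$ be a subcone which is d-dense in $C$. Then the weak upper topologies $w(D,C_0)$ and $w(D,C)$ on $D$ coincide.
   Context: $\overline{\mathbb{R}}_+=[0,+\infty)\cup\{+\infty\}$ with its usual order and extended arithmetic ($r+\infty=+\infty$, $r\cdot\infty=\infty$ for $r>0$, $0\cdot\infty=0$), with the upper topology (open sets $\emptyset$, $\overline{\mathbb{R}}_+$, $]r,+\infty]$ for $r\in[0,\infty)$); lower semicontinuous means continuous for it. A cone is a commutative monoid with a scalar multiplication by $[0,\infty)$ satisfying $r(x+y)=rx+ry$, $(r+s)x=rx+sx$, $(rs)x=r(sx)$, $1x=x$, $0x=0$. A d-cone is a cone with a directed complete partial order (every directed family has a supremum) such that addition $C\times C\to C$ and scalar multiplication $[0,\infty)\times C\to C$ are Scott-continuous (order preserving and preserving directed suprema; $[0,\infty)$ with its usual order). A d-subcone of $C$ is a subcone closed under suprema (taken in $C$) of directed families; a subcone $C_0$ is d-dense if the only d-subcone of $C$ containing $C_0$ is $C$. A bilinear map is additive and homogeneous in each argument; it is non-singular if for $y\ne y'$ in $D$ some $x\in C$ has $\langle x,y\rangle\ne\langle x,y'\rangle$. For $x\in C$, $\widehat x(y)=\langle x,y\rangle$; for $B\subseteq C$, $w(D,B)$ is the coarsest topology on $D$ making all $\widehat x$, $x\in B$, lower semicontinuous. *)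

(* Defs.v *)
From Stdlib Require Import Reals.
Open Scope R_scope.

(* ---------- Extended nonnegative reals  R̄+ = [0,∞) ∪ {∞} ----------
   Represented by option R: Some r = the finite value r, None = +∞.
   Nonnegativity of the values of a pairing is imposed as a hypothesis. *)
Definition ER := option R.
Definition ER_nonneg (v : ER) : Prop :=
  match v with Some a => 0 <= a | None => True end.

Definition eadd (u v : ER) : ER :=
  match u, v with Some a, Some b => Some (a + b) | _, _ => None end.

(* r * v for r in [0,∞), with 0 * ∞ = 0 *)
Definition emul (r : R) (v : ER) : ER :=
  match v with
  | Some a => Some (r * a)
  | None => if Req_EM_T r 0 then Some 0 else None
  end.

Definition ele (u v : ER) : Prop :=
  match u, v with
  | Some a, Some b => a <= b
  | _, None => True
  | None, Some _ => False
  end.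

(* the basic open set ]r,+∞] of the upper topology, r in [0,∞) *)
Definition egt (r : R) (v : ER) : Prop :=
  match v with Some a => r < a | None => True end.

Definition is_esup (P : ER -> Prop) (s : ER) : Prop :=
  (forall v, P v -> ele v s) /\ (forall u, (forall v, P v -> ele v u) -> ele s u).

Definition directed {T : Type} (le : T -> T -> Prop) (P : T -> Prop) : Prop :=
  (exists x, P x) /\
  (forall a b, P a -> P b -> exists c, P c /\ le a c /\ le b c).

Definition is_lub {T : Type} (le : T -> T -> Prop) (P : T -> Prop) (s : T) : Prop :=
  (forall x, P x -> le x s) /\ (forall u, (forall x, P x -> le x u) -> le s u).

Record dcone := DCone {
  car :> Type;
  czero : car;
  cadd : car -> car -> car;
  csmul : R -> car -> car;      (* only used for scalars in [0,∞) *)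
  cle : car -> car -> Prop;
  cadd_assoc : forall x y z, cadd x (cadd y z) = cadd (cadd x y) z;
  cadd_comm : forall x y, cadd x y = cadd y x;
  cadd_0 : forall x, cadd x czero = x;
  csmul_addr : forall r x y, 0 <= r -> csmul r (cadd x y) = cadd (csmul r x) (csmul r y);
  csmul_addl : forall r s x, 0 <= r -> 0 <= s ->
      csmul (r + s) x = cadd (csmul r x) (csmul s x);
  csmul_mul : forall r s x, 0 <= r -> 0 <= s -> csmul (r * s) x = csmul r (csmul s x);
  csmul_1 : forall x, csmul 1 x = x;
  csmul_0 : forall x, csmul 0 x = czero;
  cle_refl : forall x, cle x x;
  cle_trans : forall x y z, cle x y -> cle y z -> cle x z;
  cle_antisym : forall x y, cle x y -> cle y x -> x = y;
  c_dcpo : forall P : car -> Prop, directed cle P -> exists s, is_lub cle P s;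
  cadd_mono : forall x x' y y', cle x x' -> cle y y' -> cle (cadd x y) (cadd x' y');
  cadd_sup : forall (P : car * car -> Prop) s1 s2,
      directed (fun p q => cle (fst p) (fst q) /\ cle (snd p) (snd q)) P ->
      is_lub cle (fun x => exists p, P p /\ fst p = x) s1 ->
      is_lub cle (fun y => exists p, P p /\ snd p = y) s2 ->
      is_lub cle (fun z => exists p, P p /\ cadd (fst p) (snd p) = z) (cadd s1 s2);
  csmul_mono : forall r s x y, 0 <= r -> r <= s -> cle x y -> cle (csmul r x) (csmul s y);
  csmul_sup : forall (P : R * car -> Prop) r x,
      (forall p, P p -> 0 <= fst p) ->
      directed (fun p q => fst p <= fst q /\ cle (snd p) (snd q)) P ->
      0 <= r ->
      is_lub Rle (fun a => exists p, P p /\ fst p = a) r ->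
      is_lub cle (fun y => exists p, P p /\ snd p = y) x ->
      is_lub cle (fun z => exists p, P p /\ csmul (fst p) (snd p) = z) (csmul r x)
}.

Arguments czero {d}.
Arguments cadd {d}.
Arguments csmul {d}.
Arguments cle {d}.

Definition subcone (C : dcone) (S : C -> Prop) : Prop :=
  S czero /\ (forall x y, S x -> S y -> S (cadd x y)) /\
  (forall r x, 0 <= r -> S x -> S (csmul r x)).

Definition d_subcone (C : dcone) (S : C -> Prop) : Prop :=
  subcone C S /\
  (forall P s, (forall x, P x -> S x) -> directed cle P -> is_lub cle P s -> S s).

Definition d_dense (C : dcone) (C0 : C -> Prop) : Prop :=
  forall S, d_subcone C S -> (forall x, C0 x -> S x) -> forall x, S x.

Definition bilinear (C D : dcone) (p : C -> D -> ER) : Prop :=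
  (forall x y, ER_nonneg (p x y)) /\
  (forall x x' y, p (cadd x x') y = eadd (p x y) (p x' y)) /\
  (forall r x y, 0 <= r -> p (csmul r x) y = emul r (p x y)) /\
  (forall x y y', p x (cadd y y') = eadd (p x y) (p x y')) /\
  (forall r x y, 0 <= r -> p x (csmul r y) = emul r (p x y)).

Definition non_singular (C D : dcone) (p : C -> D -> ER) : Prop :=
  forall y y' : D, y <> y' -> exists x : C, p x y <> p x y'.

Definition scott_cont_ER (C : dcone) (f : C -> ER) : Prop :=
  (forall x y, cle x y -> ele (f x) (f y)) /\
  (forall P s, directed cle P -> is_lub cle P s ->
     is_esup (fun v => exists x, P x /\ f x = v) (f s)).

(* ---------- weak upper topology w(D,B) ----------
   The coarsest topology on D making every  y |-> <x,y>  (x in B) lower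
   semicontinuous, i.e. continuous for the upper topology on R̄+ (whose open
   sets are ∅, R̄+ and ]r,+∞], r in [0,∞)).  It is the topology generated by
   the subbasic sets  {y | r < <x,y>}, x in B, r >= 0. *)
Inductive w_open (C D : dcone) (p : C -> D -> ER) (B : C -> Prop) : (D -> Prop) -> Prop :=
  | wo_sub : forall x r, B x -> 0 <= r -> w_open C D p B (fun y => egt r (p x y))
  | wo_full : w_open C D p B (fun _ => True)
  | wo_inter : forall U V, w_open C D p B U -> w_open C D p B V ->
      w_open C D p B (fun y => U y /\ V y)
  | wo_union : forall F : (D -> Prop) -> Prop, (forall U, F U -> w_open C D p B U) ->
      w_open C D p B (fun y => exists U, F U /\ U y)
  | wo_ext : forall U V, w_open C D p B U -> (forall y, U y <-> V y) -> w_open C D p B V.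

(* Main.v *)
Require Import Defs.
From Stdlib Require Import Reals Lra Classical.
Open Scope R_scope.

Lemma w_mono (C D : dcone) (p : C -> D -> ER) (B B' : C -> Prop) U :
  (forall x, B x -> B' x) -> w_open C D p B U -> w_open C D p B' U.
Proof.
  intros HB H; induction H.
  - apply wo_sub; auto.
  - apply wo_full.
  - apply wo_inter; auto.
  - apply wo_union; auto.
  - eapply wo_ext; eauto.
Qed.

Lemma w_empty (C D : dcone) (p : C -> D -> ER) B :
  w_open C D p B (fun _ => False).
Proof.
  eapply wo_ext.
  - apply (wo_union C D p B (fun _ => False)). intros U [].
  - intros y; split; [intros [U [[] _]] | intros []].
Qed.

Lemma emul0 v : emul 0 v = Some 0.
Proof.
  destruct v; simpl. now rewrite Rmult_0_l.
  destruct (Req_EM_T 0 0); [reflexivity | lra].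
Qed.

Lemma egt_ele r v : egt r v <-> ~ ele v (Some r).
Proof. destruct v; simpl; split; intros; lra || tauto. Qed.

Lemma egt_mono r u v : ele u v -> egt r u -> egt r v.
Proof. destruct u, v; simpl; intros; lra || tauto. Qed.

Theorem lemma4p6 (C D : dcone) (p : C -> D -> ER) (C0 : C -> Prop) :
  bilinear C D p ->
  non_singular C D p ->
  (forall y : D, scott_cont_ER C (fun x => p x y)) ->
  (forall x : C, scott_cont_ER D (fun y => p x y)) ->
  subcone C C0 ->
  d_dense C C0 ->
  forall U : D -> Prop, w_open C D p C0 U <-> w_open C D p (fun _ => True) U.
Proof.
  intros [Hnn [Hadd [Hsm _]]] _ Hsc _ _ Hdd U.
  split; [apply w_mono; auto |].
  set (S := fun x : C => forall r, 0 <= r -> w_open C D p C0 (fun y => egt r (p x y))).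
  assert (Hz : forall y, p czero y = Some 0).
  { intros y. rewrite <- (csmul_0 C czero). rewrite Hsm by lra. apply emul0. }
  assert (HS : forall x, S x).
  { apply Hdd; [| intros x Hx r Hr; now apply wo_sub].
    split; [split; [| split] |].
    - intros r Hr. eapply wo_ext; [apply w_empty |].
      intros y; rewrite Hz; simpl; split; [tauto | lra].
    - intros x x' Hx Hx' s Hs.
      eapply wo_ext.
      + apply (wo_union C D p C0 (fun V =>
           (forall y, V y <-> egt s (p x y)) \/ (forall y, V y <-> egt s (p x' y)) \/
           exists a, 0 <= a <= s /\
             (forall y, V y <-> (egt a (p x y) /\ egt (s - a) (p x' y))))).
        intros V [HV | [HV | [a [Ha HV]]]].
        * eapply wo_ext; [apply (Hx s Hs) |]. intros y; now rewrite HV.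
        * eapply wo_ext; [apply (Hx' s Hs) |]. intros y; now rewrite HV.
        * eapply wo_ext; [apply wo_inter; [apply (Hx a) | apply (Hx' (s - a))] |]; try lra.
          intros y; now rewrite HV.
      + intros y. rewrite Hadd. simpl.
        pose proof (Hnn x y) as N1; pose proof (Hnn x' y) as N2.
        split.
        * intros [V [HV Vy]].
          destruct HV as [HV | [HV | [a [Ha HV]]]]; apply HV in Vy.
          -- destruct (p x y), (p x' y); simpl in *; lra || auto.
          -- destruct (p x y), (p x' y); simpl in *; lra || auto.
          -- destruct Vy as [V1 V2].
             destruct (p x y), (p x' y); simpl in *; lra || auto.
        * intros Hy.
          destruct (p x y) as [u|] eqn:E1.
          2:{ exists (fun y => egt s (p x y)). split; [left; tauto|]. now rewrite E1. }
          destruct (p x' y) as [v|] eqn:E2.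
          2:{ exists (fun y => egt s (p x' y)). split; [right; left; tauto|]. now rewrite E2. }
          simpl in *.
          destruct (Rlt_dec s u).
          { exists (fun y => egt s (p x y)). split; [left; tauto|]. now rewrite E1. }
          destruct (Rlt_dec s v).
          { exists (fun y => egt s (p x' y)). split; [right; left; tauto|]. now rewrite E2. }
          set (a := u - (u + v - s) / 2).
          exists (fun y => egt a (p x y) /\ egt (s - a) (p x' y)).
          split. { right; right; exists a; split; [unfold a; lra | tauto]. }
          rewrite E1, E2; simpl; unfold a; lra.
    - intros r x Hr Hx s Hs.
      destruct (Req_EM_T r 0) as [->|Hr0].
      + eapply wo_ext; [apply w_empty |].
        intros y; rewrite csmul_0, Hz; simpl; split; [tauto | lra].
      + eapply wo_ext; [apply (Hx (s / r)) |].
        { apply Rmult_le_pos; auto. left; apply Rinv_0_lt_compat; lra. }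
        intros y; rewrite Hsm by auto.
        destruct (p x y) as [a|]; simpl.
        * assert (0 < r) by lra. split; intros H'.
          -- apply (Rmult_lt_compat_l r) in H'; auto. field_simplify in H'; lra.
          -- apply (Rmult_lt_reg_l r); auto. field_simplify; lra.
        * destruct (Req_EM_T r 0); [lra | tauto].
    - intros P s HP Hdir Hlub r Hr.
      eapply wo_ext.
      + apply (wo_union C D p C0 (fun V => exists x, P x /\ forall y, V y <-> egt r (p x y))).
        intros V [x [Px HV]]. eapply wo_ext; [apply (HP x Px r Hr) |].
        intros y; now rewrite HV.
      + intros y. destruct (Hsc y) as [_ Hc]. destruct (Hc P s Hdir Hlub) as [Hub Hle].
        split.
        * intros [V [[x [Px HV]] Vy]]. apply HV in Vy.
          eapply egt_mono; [| exact Vy]. apply Hub; eauto.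
        * intros Hy. apply NNPP; intros Hn.
          apply egt_ele in Hy; apply Hy. apply Hle.
          intros v [x [Px <-]]. apply NNPP; intros Hv.
          apply Hn. exists (fun y => egt r (p x y)). split.
          -- exists x; split; auto; tauto.
          -- now apply egt_ele. }
  intros H; induction H.
  - now apply HS.
  - apply wo_full.
  - apply wo_inter; auto.
  - apply wo_union; auto.
  - eapply wo_ext; eauto.
Qed.
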